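(* Let $\mathcal L$ be one of $\lambda^{S},\lambda^{SR},\lambda^{SJ},\lambda^{ML}$ and let $\Gamma\vdash t:A$, $\Gamma\vdash u:A$ be terms of $\mathcal L$. If $[\![t]\!]=[\![u]\!]$ in every proof-relevant possible-world model whose frame is a proof-relevant $\mathcal L$-frame, then $\Gamma\vdash t\equiv u:A$ in $\mathcal L$.
   Context: Calculi. Types: $A,B ::= \iota \mid 1 \mid A\times B \mid A\to B \mid \Diamond A$ ($\iota$ a base type); contexts are lists of distinct typed variables. Simply typed terms: variables, $()$, $\langle t,u\rangle$, $\mathsf{fst}\,t$, $\mathsf{snd}\,t$, $\lambda x.t$, $t\,u$ with standard typing. Modal formers: (letmap) $\Gamma\vdash t:\Diamond A$, $\Gamma,x:A\vdash u:B$ give $\Gamma\vdash\mathsf{letmap}\ x=t\ \mathsf{in}\ u:\Diamond B$; (ret) $\Gamma\vdash t:A$ gives $\Gamma\vdash\mathsf{ret}\,t:\Diamond A$; (let) $\Gamma\vdash t:\Diamond A$, $\Gamma,x:A\vdash u:\Diamond B$ give $\Gamma\vdash\mathsf{let}\ x=t\ \mathsf{in}\ u:\Diamond B$. $\lambda^{S}$ has letmap; $\lambda^{SR}$ letmap and ret; $\lambda^{SJ}$ letmap and let; $\lambda^{ML}$ ret and let. The equational theory $\equiv$ of each calculus is the least congruence containing the simply typed $\beta\eta$-laws ($t\equiv()$ at $1$; $t\equiv\langle\mathsf{fst}\,t,\mathsf{snd}\,t\rangle$; $\mathsf{fst}\langle t,u\rangle\equiv t$; $\mathsf{snd}\langle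 t,u\rangle\equiv u$; $t\equiv\lambda x.\,t\,x$; $(\lambda x.t)u\equiv t[u/x]$) and the modal laws (terms weakened where needed): $t\equiv\mathsf{letmap}\ x=t\ \mathsf{in}\ x$ and $\mathsf{letmap}\ y=(\mathsf{letmap}\ x=t\ \mathsf{in}\ u)\ \mathsf{in}\ u'\equiv\mathsf{letmap}\ x=t\ \mathsf{in}\ u'[u/y]$ [$\lambda^{S},\lambda^{SR},\lambda^{SJ}$]; $\mathsf{letmap}\ x=\mathsf{ret}\,t\ \mathsf{in}\ u\equiv\mathsf{ret}(u[t/x])$ [$\lambda^{SR}$]; $\mathsf{let}\ y=(\mathsf{letmap}\ x=t\ \mathsf{in}\ u)\ \mathsf{in}\ u'\equiv\mathsf{let}\ x=t\ \mathsf{in}\ u'[u/y]$ and $\mathsf{letmap}\ y=(\mathsf{let}\ x=t\ \mathsf{in}\ u)\ \mathsf{in}\ u'\equiv\mathsf{let}\ x=t\ \mathsf{in}\ (\mathsf{letmap}\ y=u\ \mathsf{in}\ u')$ [$\lambda^{SJ}$]; $\mathsf{let}\ y=(\mathsf{let}\ x=t\ \mathsf{in}\ u)\ \mathsf{in}\ u'\equiv\mathsf{let}\ x=t\ \mathsf{in}\ (\mathsf{let}\ y=u\ \mathsf{in}\ u')$ [$\lambda^{SJ},\lambda^{ML}$]; $\mathsf{let}\ x=\mathsf{ret}\,t\ \mathsf{in}\ u\equiv u[t/x]$ and $t\equiv\mathsf{let}\ x=t\ \mathsf{in}\ \mathsf{ret}\,x$ [$\lambda^{ML}$]. Frames (constructive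 meta-theory). A proof-relevant $\lambda^{S}$-frame $(W,\le_i,R_m)$: a type $W$, relations $\le_i,R_m:W\to W\to\mathrm{Type}$, $\mathrm{refl}_i$, $\mathrm{trans}_i$ making $\le_i$ a category; $\mathrm{factor}:w\le_i w'\to w\,R_m\,v\to\Sigma_{v'}.\,(w'\,R_m\,v')\times(v\le_i v')$ with $\mathrm{factor}(\mathrm{refl}_i,m)=\langle m,\mathrm{refl}_i\rangle$ and $\mathrm{factor}(\mathrm{trans}_i(i_1,i_2),m)=\langle m_2',\mathrm{trans}_i(i_1',i_2')\rangle$ where $\langle m_1',i_1'\rangle=\mathrm{factor}(i_1,m)$, $\langle m_2',i_2'\rangle=\mathrm{factor}(i_2,m_1')$; $\mathrm{incl}:w\,R_m\,v\to w\le_i v$ with $\mathrm{trans}_i(i,\mathrm{incl}(m'))=\mathrm{trans}_i(\mathrm{incl}(m),i')$ when $\langle m',i'\rangle=\mathrm{factor}(i,m)$. A $\lambda^{SR}$-frame adds $\mathrm{refl}_m:w\,R_m\,w$ with $\mathrm{factor}(i,\mathrm{refl}_m)=\langle\mathrm{refl}_m,i\rangle$, $\mathrm{incl}(\mathrm{refl}_m)=\mathrm{refl}_i$. A $\lambda^{SJ}$-frame adds an associative $\mathrm{trans}_m:u\,R_m\,v\to v\,R_m\,w\to u\,R_m\,w$ with $\mathrm{factor}(i,\mathrm{trans}_m(m_1,m_2))=\langle\mathrm{trans}_m(m_1',m_2'),i_2'\rangle$ where $\langle m_1',i_1'\rangle=\mathrm{factor}(i,m_1)$, $\langle m_2',i_2'\rangle=\mathrm{factor}(i_1',m_2)$,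 and $\mathrm{incl}(\mathrm{trans}_m(m_1,m_2))=\mathrm{trans}_i(\mathrm{incl}\,m_1,\mathrm{incl}\,m_2)$. A $\lambda^{ML}$-frame is both, with $\mathrm{trans}_m(\mathrm{refl}_m,m)=m=\mathrm{trans}_m(m,\mathrm{refl}_m)$. A presheaf is a family $P_w$ with functorial transports $P(i):P_w\to P_{w'}$. Models and interpretation. A model is a frame with a presheaf $V$ (valuation of $\iota$). $[\![\iota]\!]_w=V_w$, $[\![1]\!]_w=\top$, $[\![A\times B]\!]_w=[\![A]\!]_w\times[\![B]\!]_w$, $[\![A\to B]\!]_w=\forall w'.\,w\le_i w'\to[\![A]\!]_{w'}\to[\![B]\!]_{w'}$, $[\![\Diamond A]\!]_w=\Sigma_v.\,(w\,R_m\,v)\times[\![A]\!]_v$ (transport for $\Diamond$ via $\mathrm{factor}$); $[\![\Gamma]\!]_w$ the iterated product. Terms: variables by projection; unit/pairs pointwise; $[\![\lambda x.t]\!]\gamma=\lambda i.\lambda a.[\![t]\!]([\![\Gamma]\!](i)(\gamma),a)$; $[\![t\,u]\!]\gamma=[\![t]\!]\gamma\ \mathrm{refl}_i\ ([\![u]\!]\gamma)$; $[\![\mathsf{letmap}\ x=t\ \mathsf{in}\ u]\!]\gamma=\langle v,m,[\![u]\!]([\![\Gamma]\!](\mathrm{incl}\,m)(\gamma),a)\rangle$ where $\langle v,m,a\rangle=[\![t]\!]\gamma$; $[\![\mathsf{ret}\,t]\!]_w\gamma=\langle w,\mathrm{refl}_m,[\![t]\!]\gamma\rangle$; $[\![\mathsf{let}\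 x=t\ \mathsf{in}\ u]\!]\gamma=\langle v',\mathrm{trans}_m(m,m'),b\rangle$ where $\langle v,m,a\rangle=[\![t]\!]\gamma$, $\langle v',m',b\rangle=[\![u]\!]([\![\Gamma]\!](\mathrm{incl}\,m)(\gamma),a)$. $[\![t]\!]=[\![u]\!]$ means equality at every world and every environment. *)

(* Defs.v *)
From Stdlib Require Import List Bool.
Import ListNotations.

Inductive Calc : Type := cS | cSR | cSJ | cML.

Definition hasLetmap (L : Calc) : bool :=
  match L with cS | cSR | cSJ => true | cML => false end.
Definition hasRet (L : Calc) : bool :=
  match L with cSR | cML => true | _ => false end.
Definition hasLet (L : Calc) : bool :=
  match L with cSJ | cML => true | _ => false end.

Inductive Ty : Type :=
| Base : Ty
| Unit : Ty
| Prod : Ty -> Ty -> Ty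
| Arr  : Ty -> Ty -> Ty
| Dia  : Ty -> Ty.

(** Contexts: lists of types, variables are de Bruijn indices
    (the head of the list is the most recently bound variable). *)
Definition Ctx := list Ty.

Inductive Var : Ctx -> Ty -> Type :=
| vz : forall G A, Var (A :: G) A
| vs : forall G A B, Var G A -> Var (B :: G) A.
Arguments vz {G A}.
Arguments vs {G A B} _.

Inductive Tm (L : Calc) : Ctx -> Ty -> Type :=
| var    : forall G A, Var G A -> Tm L G A
| tunit  : forall G, Tm L G Unit
| pair   : forall G A B, Tm L G A -> Tm L G B -> Tm L G (Prod A B)
| fst_   : forall G A B, Tm L G (Prod A B) -> Tm L G A
| snd_   : forall G A B, Tm L G (Prod A B) -> Tm L G B
| lam    : forall G A B, Tm L (A :: G) B -> Tm L G (Arr A B)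
| app    : forall G A B, Tm L G (Arr A B) -> Tm L G A -> Tm L G B
| letmap : forall G A B, hasLetmap L = true ->
             Tm L G (Dia A) -> Tm L (A :: G) B -> Tm L G (Dia B)
| ret    : forall G A, hasRet L = true -> Tm L G A -> Tm L G (Dia A)
| letin  : forall G A B, hasLet L = true ->
             Tm L G (Dia A) -> Tm L (A :: G) (Dia B) -> Tm L G (Dia B).
Arguments var {L G A} _.
Arguments tunit {L G}.
Arguments pair {L G A B} _ _.
Arguments fst_ {L G A B} _.
Arguments snd_ {L G A B} _.
Arguments lam {L G A B} _.
Arguments app {L G A B} _ _.
Arguments letmap {L G A B} _ _ _.
Arguments ret {L G A} _ _.
Arguments letin {L G A B} _ _ _.

Definition Ren (G D : Ctx) := forall A, Var G A -> Var D A.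
Definition Sub (L : Calc) (G D : Ctx) := forall A, Var G A -> Tm L D A.

Definition rcons {G D B} (x : Var D B) (r : Ren G D) : Ren (B :: G) D :=
  fun A v =>
    match v in Var G' A'
      return (match G' with
              | [] => unit
              | B' :: G'' => Var D B' -> Ren G'' D -> Var D A'
              end : Type)
    with
    | vz => fun x _ => x
    | vs v' => fun _ r => r _ v'
    end x r.

Definition wkR {G B} : Ren G (B :: G) := fun _ v => vs v.

Definition liftR {G D B} (r : Ren G D) : Ren (B :: G) (B :: D) :=
  rcons vz (fun A v => vs (r A v)).

Fixpoint ren {L G D A} (r : Ren G D) (t : Tm L G A) : Tm L D A :=
  match t in Tm _ G' A' return Ren G' D -> Tm L D A' with
  | var x => fun r => var (r _ x)
  | tunit => fun _ => tunit
  | pair t u => fun r => pair (ren r t) (ren r u)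
  | fst_ t => fun r => fst_ (ren r t)
  | snd_ t => fun r => snd_ (ren r t)
  | lam t => fun r => lam (ren (liftR r) t)
  | app t u => fun r => app (ren r t) (ren r u)
  | letmap p t u => fun r => letmap p (ren r t) (ren (liftR r) u)
  | ret p t => fun r => ret p (ren r t)
  | letin p t u => fun r => letin p (ren r t) (ren (liftR r) u)
  end r.

Definition wk {L G A B} (t : Tm L G A) : Tm L (B :: G) A := ren wkR t.

Definition scons {L G D B} (t : Tm L D B) (s : Sub L G D) : Sub L (B :: G) D :=
  fun A v =>
    match v in Var G' A'
      return (match G' with
              | [] => unit
              | B' :: G'' => Tm L D B' -> Sub L G'' D -> Tm L D A'
              end : Type)
    with
    | vz => fun t _ => t
    | vs v' => fun _ s => s _ v'
    end t s.

Definition idS {L G} : Sub L G G := fun _ v => var v.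

Definition liftS {L G D B} (s : Sub L G D) : Sub L (B :: G) (B :: D) :=
  scons (var vz) (fun A v => wk (s A v)).

Fixpoint sub {L G D A} (s : Sub L G D) (t : Tm L G A) : Tm L D A :=
  match t in Tm _ G' A' return Sub L G' D -> Tm L D A' with
  | var x => fun s => s _ x
  | tunit => fun _ => tunit
  | pair t u => fun s => pair (sub s t) (sub s u)
  | fst_ t => fun s => fst_ (sub s t)
  | snd_ t => fun s => snd_ (sub s t)
  | lam t => fun s => lam (sub (liftS s) t)
  | app t u => fun s => app (sub s t) (sub s u)
  | letmap p t u => fun s => letmap p (sub s t) (sub (liftS s) u)
  | ret p t => fun s => ret p (sub s t)
  | letin p t u => fun s => letin p (sub s t) (sub (liftS s) u)
  end s.

Definition subst1 {L G A B} (u : Tm L G A) (t : Tm L (A :: G) B) : Tm L G B :=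
  sub (scons u idS) t.

Definition substw {L G A B C} (u : Tm L (A :: G) B) (t : Tm L (B :: G) C)
  : Tm L (A :: G) C :=
  sub (scons u (fun _ v => var (vs v))) t.

Definition wk1 {L G A B C} (t : Tm L (B :: G) C) : Tm L (B :: A :: G) C :=
  ren (liftR wkR) t.

(** * Equational theory: least congruence containing the laws *)

Inductive Conv {L : Calc} : forall {G A}, Tm L G A -> Tm L G A -> Prop :=
| cv_refl  : forall G A (t : Tm L G A), Conv t t
| cv_sym   : forall G A (t u : Tm L G A), Conv t u -> Conv u t
| cv_trans : forall G A (t u v : Tm L G A), Conv t u -> Conv u v -> Conv t v
| cg_pair : forall G A B (t t' : Tm L G A) (u u' : Tm L G B),
    Conv t t' -> Conv u u' -> Conv (pair t u) (pair t' u')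
| cg_fst : forall G A B (t t' : Tm L G (Prod A B)), Conv t t' -> Conv (fst_ t) (fst_ t')
| cg_snd : forall G A B (t t' : Tm L G (Prod A B)), Conv t t' -> Conv (snd_ t) (snd_ t')
| cg_lam : forall G A B (t t' : Tm L (A :: G) B), Conv t t' -> Conv (lam t) (lam t')
| cg_app : forall G A B (t t' : Tm L G (Arr A B)) (u u' : Tm L G A),
    Conv t t' -> Conv u u' -> Conv (app t u) (app t' u')
| cg_letmap : forall G A B p (t t' : Tm L G (Dia A)) (u u' : Tm L (A :: G) B),
    Conv t t' -> Conv u u' -> Conv (letmap p t u) (letmap p t' u')
| cg_ret : forall G A p (t t' : Tm L G A), Conv t t' -> Conv (ret p t) (ret p t')
| cg_letin : forall G A B p (t t' : Tm L G (Dia A)) (u u' : Tm L (A :: G) (Dia B)),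
    Conv t t' -> Conv u u' -> Conv (letin p t u) (letin p t' u')
| ax_unit_eta : forall G (t : Tm L G Unit), Conv t tunit
| ax_prod_eta : forall G A B (t : Tm L G (Prod A B)), Conv t (pair (fst_ t) (snd_ t))
| ax_fst_beta : forall G A B (t : Tm L G A) (u : Tm L G B), Conv (fst_ (pair t u)) t
| ax_snd_beta : forall G A B (t : Tm L G A) (u : Tm L G B), Conv (snd_ (pair t u)) u
| ax_arr_eta : forall G A B (t : Tm L G (Arr A B)), Conv t (lam (app (wk t) (var vz)))
| ax_arr_beta : forall G A B (t : Tm L (A :: G) B) (u : Tm L G A),
    Conv (app (lam t) u) (subst1 u t)
| ax_letmap_eta : forall G A p (t : Tm L G (Dia A)), Conv t (letmap p t (var vz))
| ax_letmap_assoc : forall G A B C p (t : Tm L G (Dia A)) (u : Tm L (A :: G) B)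
      (u' : Tm L (B :: G) C),
    Conv (letmap p (letmap p t u) u') (letmap p t (substw u u'))
| ax_letmap_ret : forall G A B p q (t : Tm L G A) (u : Tm L (A :: G) B),
    Conv (letmap p (ret q t) u) (ret q (subst1 t u))
| ax_let_letmap : forall G A B C p q (t : Tm L G (Dia A)) (u : Tm L (A :: G) B)
      (u' : Tm L (B :: G) (Dia C)),
    Conv (letin q (letmap p t u) u') (letin q t (substw u u'))
| ax_letmap_let : forall G A B C p q (t : Tm L G (Dia A)) (u : Tm L (A :: G) (Dia B))
      (u' : Tm L (B :: G) C),
    Conv (letmap p (letin q t u) u') (letin q t (letmap p u (wk1 u')))
| ax_let_assoc : forall G A B C q (t : Tm L G (Dia A)) (u : Tm L (A :: G) (Dia B))
      (u' : Tm L (B :: G) (Dia C)),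
    Conv (letin q (letin q t u) u') (letin q t (letin q u (wk1 u')))
| ax_let_beta : forall G A B q r (t : Tm L G A) (u : Tm L (A :: G) (Dia B)),
    Conv (letin q (ret r t) u) (subst1 t u)
| ax_let_eta : forall G A q r (t : Tm L G (Dia A)),
    Conv t (letin q t (ret r (var vz))).

(** * Proof-relevant frames *)

Record SFrame : Type := {
  W : Type;
  Ri : W -> W -> Type;
  Rm : W -> W -> Type;
  refl_i : forall w, Ri w w;
  trans_i : forall u v w, Ri u v -> Ri v w -> Ri u w;
  trans_i_refl_l : forall u v (i : Ri u v), trans_i _ _ _ (refl_i u) i = i;
  trans_i_refl_r : forall u v (i : Ri u v), trans_i _ _ _ i (refl_i v) = i;
  trans_i_assoc : forall u v w x (i1 : Ri u v) (i2 : Ri v w) (i3 : Ri w x),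
      trans_i _ _ _ (trans_i _ _ _ i1 i2) i3 = trans_i _ _ _ i1 (trans_i _ _ _ i2 i3);
  factor : forall w w' v, Ri w w' -> Rm w v -> {v' : W & (Rm w' v' * Ri v v')%type};
  factor_refl : forall w v (m : Rm w v),
      factor _ _ _ (refl_i w) m = existT _ v (m, refl_i v);
  factor_trans : forall w w' w'' v (i1 : Ri w w') (i2 : Ri w' w'') (m : Rm w v),
      factor _ _ _ (trans_i _ _ _ i1 i2) m =
      (let f1 := factor _ _ _ i1 m in
       let f2 := factor _ _ _ i2 (fst (projT2 f1)) in
       existT _ (projT1 f2)
         (fst (projT2 f2), trans_i _ _ _ (snd (projT2 f1)) (snd (projT2 f2))));
  incl : forall w v, Rm w v -> Ri w v;
  incl_factor : forall w w' v (i : Ri w w') (m : Rm w v),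
      trans_i _ _ _ i (incl _ _ (fst (projT2 (factor _ _ _ i m)))) =
      trans_i _ _ _ (incl _ _ m) (snd (projT2 (factor _ _ _ i m)))
}.
Arguments W _ : clear implicits.
Arguments Ri {_} _ _.
Arguments Rm {_} _ _.
Arguments refl_i {_} _.
Arguments trans_i {_ _ _ _} _ _.
Arguments factor {_ _ _ _} _ _.
Arguments incl {_ _ _} _.

Record ReflM (F : SFrame) : Type := {
  refl_m : forall w, @Rm F w w;
  factor_refl_m : forall w w' (i : Ri w w'),
      factor i (refl_m w) = existT _ w' (refl_m w', i);
  incl_refl_m : forall w, incl (refl_m w) = refl_i w
}.
Arguments refl_m {_} _ _.

Record TransM (F : SFrame) : Type := {
  trans_m : forall u v w, @Rm F u v -> Rm v w -> Rm u w;
  trans_m_assoc : forall u v w x (m1 : Rm u v) (m2 : Rm v w) (m3 : Rm w x),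
      trans_m _ _ _ (trans_m _ _ _ m1 m2) m3 = trans_m _ _ _ m1 (trans_m _ _ _ m2 m3);
  factor_trans_m : forall u u' v w (i : Ri u u') (m1 : Rm u v) (m2 : Rm v w),
      factor i (trans_m _ _ _ m1 m2) =
      (let f1 := factor i m1 in
       let f2 := factor (snd (projT2 f1)) m2 in
       existT _ (projT1 f2)
         (trans_m _ _ _ (fst (projT2 f1)) (fst (projT2 f2)), snd (projT2 f2)));
  incl_trans_m : forall u v w (m1 : Rm u v) (m2 : Rm v w),
      incl (trans_m _ _ _ m1 m2) = trans_i (incl m1) (incl m2)
}.
Arguments trans_m {_} _ {_ _ _} _ _.

Definition MLUnits (F : SFrame) (r : ReflM F) (t : TransM F) : Prop :=
  forall u v (m : @Rm F u v),
    trans_m t (refl_m r u) m = m /\ trans_m t m (refl_m r v) = m.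

Definition Frame (L : Calc) : Type :=
  match L with
  | cS  => SFrame
  | cSR => {F : SFrame & ReflM F}
  | cSJ => {F : SFrame & TransM F}
  | cML => {F : SFrame & {r : ReflM F & {t : TransM F | MLUnits F r t}}}
  end.

Definition frame_base (L : Calc) : Frame L -> SFrame :=
  match L return Frame L -> SFrame with
  | cS => fun F => F
  | cSR => fun F => projT1 F
  | cSJ => fun F => projT1 F
  | cML => fun F => projT1 F
  end.

Definition frame_refl (L : Calc) : hasRet L = true -> forall F : Frame L, ReflM (frame_base L F) :=
  match L return hasRet L = true -> forall F : Frame L, ReflM (frame_base L F) with
  | cS => fun e => False_rect _ (Bool.diff_false_true e)
  | cSR => fun _ F => projT2 F
  | cSJ => fun e => False_rect _ (Bool.diff_false_true e)
  | cML => fun _ F => projT1 (projT2 F)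
  end.

Definition frame_trans (L : Calc) : hasLet L = true -> forall F : Frame L, TransM (frame_base L F) :=
  match L return hasLet L = true -> forall F : Frame L, TransM (frame_base L F) with
  | cS => fun e => False_rect _ (Bool.diff_false_true e)
  | cSR => fun e => False_rect _ (Bool.diff_false_true e)
  | cSJ => fun _ F => projT2 F
  | cML => fun _ F => proj1_sig (projT2 (projT2 F))
  end.

(** Models: a frame together with a presheaf (valuation of the base type). *)
Record Model (L : Calc) : Type := {
  m_frame : Frame L;
  m_V : W (frame_base L m_frame) -> Type;
  m_Vtr : forall w w', @Ri (frame_base L m_frame) w w' -> m_V w -> m_V w';
  m_Vtr_refl : forall w (x : m_V w), m_Vtr w w (refl_i w) x = x;
  m_Vtr_trans : forall w w' w'' (i1 : Ri w w') (i2 : Ri w' w'') (x : m_V w),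
      m_Vtr w w'' (trans_i i1 i2) x = m_Vtr w' w'' i2 (m_Vtr w w' i1 x)
}.
Arguments m_frame {L} _.
Arguments m_V {L} _ _.
Arguments m_Vtr {L} _ {_ _} _ _.

Definition mbase {L} (M : Model L) : SFrame := frame_base L (m_frame M).

Fixpoint sem {L} (M : Model L) (A : Ty) (w : W (mbase M)) : Type :=
  match A with
  | Base => m_V M w
  | Unit => unit
  | Prod A B => (sem M A w * sem M B w)%type
  | Arr A B => forall w', Ri w w' -> sem M A w' -> sem M B w'
  | Dia A => {v : W (mbase M) & (Rm w v * sem M A v)%type}
  end.

Fixpoint sem_tr {L} (M : Model L) (A : Ty) {w w' : W (mbase M)} (i : Ri w w')
  : sem M A w -> sem M A w' :=
  match A return sem M A w -> sem M A w' with
  | Base => fun x => m_Vtr M i x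
  | Unit => fun _ => tt
  | Prod A B => fun p => (sem_tr M A i (fst p), sem_tr M B i (snd p))
  | Arr A B => fun f w'' i' a => f w'' (trans_i i i') a
  | Dia A => fun d =>
      let fc := factor i (fst (projT2 d)) in
      existT _ (projT1 fc) (fst (projT2 fc), sem_tr M A (snd (projT2 fc)) (snd (projT2 d)))
  end.

Fixpoint Env {L} (M : Model L) (G : Ctx) (w : W (mbase M)) : Type :=
  match G with
  | [] => unit
  | A :: G => (Env M G w * sem M A w)%type
  end.

Fixpoint env_tr {L} (M : Model L) (G : Ctx) {w w' : W (mbase M)} (i : Ri w w')
  : Env M G w -> Env M G w' :=
  match G return Env M G w -> Env M G w' with
  | [] => fun _ => tt
  | A :: G => fun g => (env_tr M G i (fst g), sem_tr M A i (snd g))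
  end.

Fixpoint lookup {L} (M : Model L) {G A} (x : Var G A)
  : forall w, Env M G w -> sem M A w :=
  match x in Var G' A' return forall w, Env M G' w -> sem M A' w with
  | vz => fun w g => snd g
  | vs x' => fun w g => lookup M x' w (fst g)
  end.

Fixpoint eval {L} (M : Model L) {G A} (t : Tm L G A)
  : forall w, Env M G w -> sem M A w :=
  match t in Tm _ G' A' return forall w, Env M G' w -> sem M A' w with
  | var x => fun w g => lookup M x w g
  | tunit => fun _ _ => tt
  | pair t u => fun w g => (eval M t w g, eval M u w g)
  | fst_ t => fun w g => fst (eval M t w g)
  | snd_ t => fun w g => snd (eval M t w g)
  | @lam _ G0 _ _ t => fun w g => fun w' i a => eval M t w' (env_tr M G0 i g, a)
  | app t u => fun w g => eval M t w g w (refl_i w) (eval M u w g)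
  | @letmap _ G0 _ _ p t u => fun w g =>
      let d := eval M t w g in
      existT _ (projT1 d)
        (fst (projT2 d),
         eval M u (projT1 d) (env_tr M G0 (incl (fst (projT2 d))) g, snd (projT2 d)))
  | ret p t => fun w g =>
      existT _ w (refl_m (frame_refl L p (m_frame M)) w, eval M t w g)
  | @letin _ G0 _ _ p t u => fun w g =>
      let d := eval M t w g in
      let e := eval M u (projT1 d)
                 (env_tr M G0 (incl (fst (projT2 d))) g, snd (projT2 d)) in
      existT _ (projT1 e)
        (trans_m (frame_trans L p (m_frame M)) (fst (projT2 d)) (fst (projT2 e)),
         snd (projT2 e))
  end.

(* Main.v *)
Require Import Defs.
From Stdlib Require Import List Bool FunctionalExtensionality Eqdep_dec.
Import ListNotations.

Lemma bool_pi : forall (b : bool) (p q : b = true), p = q.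
Proof. intros; apply UIP_dec; exact Bool.bool_dec. Qed.

Definition var_case {G B} (P : forall A, Var (B :: G) A -> Prop)
  (h0 : P B vz) (hs : forall A (x : Var G A), P A (vs x)) : forall A x, P A x :=
  fun A x =>
  match x as x0 in Var G0 A0 return
    (match G0 return Var G0 A0 -> Prop with
     | [] => fun _ => True
     | B0 :: G1 => fun x => forall P : (forall A, Var (B0::G1) A -> Prop),
          P B0 vz -> (forall A x, P A (vs x)) -> P A0 x
     end) x0 with
  | vz => fun P h0 hs => h0
  | vs x' => fun P h0 hs => hs _ x'
  end P h0 hs.

Section Syn.
Variable L : Calc.

Lemma liftR_ext : forall G D B (r r' : Ren G D), (forall A x, r A x = r' A x) ->
  forall A x, @liftR G D B r A x = liftR r' A x.
Proof. intros G D B r r' H. apply var_case; simpl; [reflexivity|]. intros; cbn; rewrite H; reflexivity. Qed.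

Lemma ren_ext : forall G A (t : Tm L G A) D (r r' : Ren G D),
  (forall B x, r B x = r' B x) -> ren r t = ren r' t.
Proof.
  induction t; intros D r r' H; simpl; f_equal; auto using liftR_ext.
Qed.

Lemma ren_ren : forall G A (t : Tm L G A) D E (r1 : Ren G D) (r2 : Ren D E),
  ren r2 (ren r1 t) = ren (fun B x => r2 B (r1 B x)) t.
Proof.
  induction t; intros D E r1 r2; simpl; f_equal; auto;
  try (rewrite IHt; apply ren_ext; apply var_case; reflexivity);
  try (rewrite IHt2; apply ren_ext; apply var_case; reflexivity).
Qed.

Lemma ren_id : forall G A (t : Tm L G A) (r : Ren G G),
  (forall B x, r B x = x) -> ren r t = t.
Proof.
  induction t; intros r H; simpl; f_equal; auto;
  try (apply IHt; apply var_case; [reflexivity| intros; cbn; rewrite H; reflexivity]);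
  try (apply IHt2; apply var_case; [reflexivity| intros; cbn; rewrite H; reflexivity]).
Qed.

Lemma liftS_ext : forall G D B (s s' : Sub L G D), (forall A x, s A x = s' A x) ->
  forall A x, @liftS L G D B s A x = liftS s' A x.
Proof. intros G D B s s' H. apply var_case; simpl; [reflexivity|]. intros; cbn; rewrite H; reflexivity. Qed.

Lemma sub_ext : forall G A (t : Tm L G A) D (s s' : Sub L G D),
  (forall B x, s B x = s' B x) -> sub s t = sub s' t.
Proof.
  induction t; intros D s s' H; simpl; f_equal; auto using liftS_ext.
Qed.

Lemma ren_sub : forall G A (t : Tm L G A) D E (s : Sub L G D) (r : Ren D E),
  ren r (sub s t) = sub (fun B x => ren r (s B x)) t.
Proof.
  induction t; intros D E s r; simpl; f_equal; auto;
  try (rewrite IHt; apply sub_ext; apply var_case; [reflexivity|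
        intros; cbn; unfold wk; rewrite !ren_ren; apply ren_ext; reflexivity]);
  try (rewrite IHt2; apply sub_ext; apply var_case; [reflexivity|
        intros; cbn; unfold wk; rewrite !ren_ren; apply ren_ext; reflexivity]).
Qed.

Lemma sub_ren : forall G A (t : Tm L G A) D E (r : Ren G D) (s : Sub L D E),
  sub s (ren r t) = sub (fun B x => s B (r B x)) t.
Proof.
  induction t; intros D E r s; simpl; f_equal; auto;
  try (rewrite IHt; apply sub_ext; apply var_case; reflexivity);
  try (rewrite IHt2; apply sub_ext; apply var_case; reflexivity).
Qed.

Lemma sub_sub : forall G A (t : Tm L G A) D E (s1 : Sub L G D) (s2 : Sub L D E),
  sub s2 (sub s1 t) = sub (fun B x => sub s2 (s1 B x)) t.
Proof.
  induction t; intros D E s1 s2; simpl; f_equal; auto;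
  try (rewrite IHt; apply sub_ext; apply var_case; [reflexivity|
        intros; cbn; unfold wk; rewrite sub_ren, ren_sub; apply sub_ext; reflexivity]);
  try (rewrite IHt2; apply sub_ext; apply var_case; [reflexivity|
        intros; cbn; unfold wk; rewrite sub_ren, ren_sub; apply sub_ext; reflexivity]).
Qed.

Lemma sub_var : forall G A (t : Tm L G A) D (r : Ren G D),
  sub (fun B x => var (r B x)) t = ren r t.
Proof.
  induction t; intros D r; simpl; f_equal; auto;
  try (rewrite <- IHt; apply sub_ext; apply var_case; reflexivity);
  try (rewrite <- IHt2; apply sub_ext; apply var_case; reflexivity).
Qed.

Lemma sub_id : forall G A (t : Tm L G A), sub idS t = t.
Proof. intros. rewrite <- (ren_id _ _ t (fun _ x => x)) at 2 by reflexivity.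
  rewrite <- sub_var. reflexivity. Qed.

End Syn.

Section C.
Variable L : Calc.

Lemma ren_subst1 : forall G D A B (r : Ren G D) (u : Tm L G A) (t : Tm L (A :: G) B),
  ren r (subst1 u t) = subst1 (ren r u) (ren (liftR r) t).
Proof. intros; unfold subst1; rewrite ren_sub, sub_ren; apply sub_ext; apply var_case; reflexivity. Qed.

Lemma ren_substw : forall G D A B C (r : Ren G D) (u : Tm L (A :: G) B) (t : Tm L (B :: G) C),
  ren (liftR r) (substw u t) = substw (ren (liftR r) u) (ren (liftR r) t).
Proof. intros; unfold substw; rewrite ren_sub, sub_ren; apply sub_ext; apply var_case; reflexivity. Qed.

Lemma ren_wk1 : forall G D A B C (r : Ren G D) (t : Tm L (B :: G) C),
  ren (liftR (liftR r)) (@wk1 L G A B C t) = wk1 (ren (liftR r) t).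
Proof. intros; unfold wk1; rewrite !ren_ren; apply ren_ext; apply var_case; [reflexivity|].
  reflexivity. Qed.

Lemma ren_wk : forall G D A B (r : Ren G D) (t : Tm L G A),
  ren (liftR r) (@wk L G A B t) = wk (ren r t).
Proof. intros; unfold wk; rewrite !ren_ren; apply ren_ext; reflexivity. Qed.

Lemma conv_ren : forall G A (t u : Tm L G A), Conv t u ->
  forall D (r : Ren G D), Conv (ren r t) (ren r u).
Proof.
  intros G A t u H; induction H; intros D0 r0; simpl;
  try (econstructor; eauto; fail).
  - rewrite ren_wk. apply ax_arr_eta.
  - rewrite ren_subst1. apply ax_arr_beta.
  - rewrite ren_substw. apply ax_letmap_assoc.
  - rewrite ren_subst1. apply ax_letmap_ret.
  - rewrite ren_substw. apply ax_let_letmap.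
  - rewrite ren_wk1. apply ax_letmap_let.
  - rewrite ren_wk1. apply ax_let_assoc.
  - rewrite ren_subst1. apply ax_let_beta.
Qed.
End C.

Inductive Tel (L : Calc) : Ctx -> Ctx -> Type :=
| tnil : forall G, hasRet L = true -> Tel L G G
| tlast : forall G A, hasLetmap L = true -> Tm L G (Dia A) -> Tel L G (A :: G)
| tcons : forall G A D, hasLet L = true -> Tm L G (Dia A) -> Tel L (A :: G) D -> Tel L G D.
Arguments tnil {L} G _.
Arguments tlast {L G A} _ _.
Arguments tcons {L G A D} _ _ _.

Section T.
Variable L : Calc.

Fixpoint tfactor {G D} (m : Tel L G D) : forall G', Ren G G' -> {D' : Ctx & (Tel L G' D' * Ren D D')%type} :=
  match m in Tel _ G0 D0 return forall G', Ren G0 G' -> {D' : Ctx & (Tel L G' D' * Ren D0 D')%type} with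
  | tnil _ p => fun G' r => existT _ G' (tnil G' p, r)
  | tlast p b => fun G' r => existT _ (_ :: G') (tlast p (ren r b), liftR r)
  | tcons p b m' => fun G' r =>
      let f := tfactor m' (_ :: G') (liftR r) in
      existT _ (projT1 f) (tcons p (ren r b) (fst (projT2 f)), snd (projT2 f))
  end.

Fixpoint tincl {G D} (m : Tel L G D) : Ren G D :=
  match m in Tel _ G0 D0 return Ren G0 D0 with
  | tnil _ _ => fun _ x => x
  | tlast _ _ => wkR
  | tcons _ _ m' => fun _ x => tincl m' _ (vs x)
  end.

Fixpoint tapp (q : hasLet L = true) {G D E} (m : Tel L G D) : Tel L D E -> Tel L G E :=
  match m in Tel _ G0 D0 return Tel L D0 E -> Tel L G0 E with
  | tnil _ _ => fun m2 => m2
  | tlast _ b => fun m2 => tcons q b m2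
  | tcons p b m' => fun m2 => tcons p b (tapp q m' m2)
  end.

Lemma liftR_id : forall G B, @liftR G G B (fun _ x => x) = (fun _ x => x).
Proof. intros. apply functional_extensionality_dep; intro A.
  apply functional_extensionality; intro x. revert A x. apply var_case; reflexivity. Qed.

Lemma liftR_comp : forall G D E B (r1 : Ren G D) (r2 : Ren D E),
  @liftR G E B (fun A x => r2 A (r1 A x)) = (fun A x => liftR r2 A (liftR r1 A x)).
Proof. intros. apply functional_extensionality_dep; intro A.
  apply functional_extensionality; intro x. revert A x. apply var_case; reflexivity. Qed.

Lemma tfactor_refl : forall G D (m : Tel L G D),
  tfactor m G (fun _ x => x) = existT _ D (m, fun _ x => x).
Proof.
  induction m; simpl.
  - reflexivity.
  - rewrite liftR_id, ren_id by reflexivity. reflexivity.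
  - rewrite liftR_id, IHm, ren_id by reflexivity. reflexivity.
Qed.

Lemma tfactor_trans : forall G D (m : Tel L G D) G' G'' (i1 : Ren G G') (i2 : Ren G' G''),
  tfactor m G'' (fun A x => i2 A (i1 A x)) =
      (let f1 := tfactor m G' i1 in
       let f2 := tfactor (fst (projT2 f1)) G'' i2 in
       existT _ (projT1 f2)
         (fst (projT2 f2), fun A x => snd (projT2 f2) A (snd (projT2 f1) A x))).
Proof.
  induction m; intros; simpl.
  - reflexivity.
  - rewrite liftR_comp, ren_ren. reflexivity.
  - rewrite liftR_comp, IHm, ren_ren. simpl. reflexivity.
Qed.

Lemma tincl_factor_pw : forall G D (m : Tel L G D) G' (i : Ren G G') A (x : Var G A),
  tincl (fst (projT2 (tfactor m G' i))) A (i A x) = snd (projT2 (tfactor m G' i)) A (tincl m A x).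
Proof.
  induction m; intros; simpl; try reflexivity.
  rewrite <- IHm. reflexivity.
Qed.

Definition SF : SFrame.
Proof.
  refine {| W := Ctx; Ri := fun G D => Ren G D; Rm := Tel L;
    refl_i := fun G => fun _ x => x;
    trans_i := fun u v w r1 r2 => fun A x => r2 A (r1 A x);
    factor := fun w w' v i m => tfactor m w' i;
    Defs.incl := fun w v m => tincl m |}.
  - reflexivity.
  - reflexivity.
  - reflexivity.
  - intros. apply tfactor_refl.
  - intros. apply tfactor_trans.
  - intros. apply functional_extensionality_dep; intro A.
    apply functional_extensionality; intro x. apply tincl_factor_pw.
Defined.

Definition RM (p : hasRet L = true) : ReflM SF.
Proof.
  refine (Build_ReflM SF (fun w => tnil w p) _ _); reflexivity.
Defined.

Lemma tapp_assoc : forall q G D (m1 : Tel L G D) E F (m2 : Tel L D E) (m3 : Tel L E F),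
  tapp q (tapp q m1 m2) m3 = tapp q m1 (tapp q m2 m3).
Proof. induction m1; intros; simpl; try reflexivity. rewrite IHm1; reflexivity. Qed.

Lemma tfactor_app : forall q G D (m1 : Tel L G D) E (m2 : Tel L D E) G' (i : Ren G G'),
  tfactor (tapp q m1 m2) G' i =
      (let f1 := tfactor m1 G' i in
       let f2 := tfactor m2 _ (snd (projT2 f1)) in
       existT _ (projT1 f2)
         (tapp q (fst (projT2 f1)) (fst (projT2 f2)), snd (projT2 f2))).
Proof.
  induction m1; intros; simpl.
  - destruct (tfactor m2 G' i) as [? [? ?]]; reflexivity.
  - reflexivity.
  - rewrite IHm1. simpl. reflexivity.
Qed.

Lemma tincl_app_pw : forall q G D (m1 : Tel L G D) E (m2 : Tel L D E) A x,
  tincl (tapp q m1 m2) A x = tincl m2 A (tincl m1 A x).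
Proof. induction m1; intros; simpl; try reflexivity. apply IHm1. Qed.

Definition TM (q : hasLet L = true) : TransM SF.
Proof.
  refine (Build_TransM SF (fun u v w m1 m2 => tapp q m1 m2) _ _ _).
  - intros; apply tapp_assoc.
  - intros; apply tfactor_app.
  - intros. apply functional_extensionality_dep; intro A.
    apply functional_extensionality; intro x. apply tincl_app_pw.
Defined.

End T.

Lemma tapp_nil_r : forall q p G D (m : Tel cML G D), tapp cML q m (tnil D p) = m.
Proof. induction m; simpl.
  - f_equal; apply bool_pi.
  - discriminate.
  - rewrite IHm; reflexivity. Qed.

Lemma MLU : MLUnits (SF cML) (RM cML eq_refl) (TM cML eq_refl).
Proof. intros u v m; split; simpl. reflexivity. apply tapp_nil_r. Qed.

Definition mkFrame (L : Calc) : Frame L :=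
  match L with
  | cS => SF cS
  | cSR => existT _ (SF cSR) (RM cSR eq_refl)
  | cSJ => existT _ (SF cSJ) (TM cSJ eq_refl)
  | cML => existT _ (SF cML) (existT _ (RM cML eq_refl) (exist _ (TM cML eq_refl) MLU))
  end.

Section Sem.
Variable L : Calc.
Variable F : SFrame.
Variable V : W F -> Type.
Variable Vtr : forall w w', Ri w w' -> V w -> V w'.
Variable rf : hasRet L = true -> ReflM F.
Variable tf : hasLet L = true -> TransM F.

Fixpoint sem' (A : Ty) (w : W F) : Type :=
  match A with
  | Base => V w
  | Unit => unit
  | Prod A B => (sem' A w * sem' B w)%type
  | Arr A B => forall w', Ri w w' -> sem' A w' -> sem' B w'
  | Dia A => {v : W F & (Rm w v * sem' A v)%type}
  end.

Fixpoint sem_tr' (A : Ty) {w w' : W F} (i : Ri w w') : sem' A w -> sem' A w' :=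
  match A return sem' A w -> sem' A w' with
  | Base => fun x => Vtr w w' i x
  | Unit => fun _ => tt
  | Prod A B => fun p => (sem_tr' A i (fst p), sem_tr' B i (snd p))
  | Arr A B => fun f w'' i' a => f w'' (trans_i i i') a
  | Dia A => fun d =>
      let fc := factor i (fst (projT2 d)) in
      existT _ (projT1 fc) (fst (projT2 fc), sem_tr' A (snd (projT2 fc)) (snd (projT2 d)))
  end.

Fixpoint Env' (G : Ctx) (w : W F) : Type :=
  match G with
  | [] => unit
  | A :: G => (Env' G w * sem' A w)%type
  end.

Fixpoint env_tr' (G : Ctx) {w w' : W F} (i : Ri w w') : Env' G w -> Env' G w' :=
  match G return Env' G w -> Env' G w' with
  | [] => fun _ => tt
  | A :: G => fun g => (env_tr' G i (fst g), sem_tr' A i (snd g))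
  end.

Fixpoint lookup' {G A} (x : Var G A) : forall w, Env' G w -> sem' A w :=
  match x in Var G' A' return forall w, Env' G' w -> sem' A' w with
  | vz => fun w g => snd g
  | vs x' => fun w g => lookup' x' w (fst g)
  end.

Fixpoint eval' {G A} (t : Tm L G A) : forall w, Env' G w -> sem' A w :=
  match t in Tm _ G' A' return forall w, Env' G' w -> sem' A' w with
  | var x => fun w g => lookup' x w g
  | tunit => fun _ _ => tt
  | pair t u => fun w g => (eval' t w g, eval' u w g)
  | fst_ t => fun w g => fst (eval' t w g)
  | snd_ t => fun w g => snd (eval' t w g)
  | @lam _ G0 _ _ t => fun w g => fun w' i a => eval' t w' (env_tr' G0 i g, a)
  | Defs.app t u => fun w g => eval' t w g w (refl_i w) (eval' u w g)
  | @letmap _ G0 _ _ p t u => fun w g =>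
      let d := eval' t w g in
      existT _ (projT1 d)
        (fst (projT2 d),
         eval' u (projT1 d) (env_tr' G0 (Defs.incl (fst (projT2 d))) g, snd (projT2 d)))
  | ret p t => fun w g =>
      existT _ w (refl_m (rf p) w, eval' t w g)
  | @letin _ G0 _ _ p t u => fun w g =>
      let d := eval' t w g in
      let e := eval' u (projT1 d)
                 (env_tr' G0 (Defs.incl (fst (projT2 d))) g, snd (projT2 d)) in
      existT _ (projT1 e)
        (trans_m (tf p) (fst (projT2 d)) (fst (projT2 e)),
         snd (projT2 e))
  end.
End Sem.

Section Iso.
Variable L : Calc.
Variable M : Model L.
Notation F := (mbase M).
Definition VV : W F -> Type := m_V M.
Definition VVtr : forall w w', Ri w w' -> VV w -> VV w' := fun w w' i x => m_Vtr M i x.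
Notation S' := (sem' F VV).

Fixpoint toS (A : Ty) : forall w, sem M A w -> S' A w :=
  match A return forall w, sem M A w -> S' A w with
  | Base => fun w x => x
  | Unit => fun w x => x
  | Prod A B => fun w p => (toS A w (fst p), toS B w (snd p))
  | Arr A B => fun w f => fun w' i a => toS B w' (f w' i (fromS A w' a))
  | Dia A => fun w d => existT _ (projT1 d) (fst (projT2 d), toS A _ (snd (projT2 d)))
  end
with fromS (A : Ty) : forall w, S' A w -> sem M A w :=
  match A return forall w, S' A w -> sem M A w with
  | Base => fun w x => x
  | Unit => fun w x => x
  | Prod A B => fun w p => (fromS A w (fst p), fromS B w (snd p))
  | Arr A B => fun w f => fun w' i a => fromS B w' (f w' i (toS A w' a))
  | Dia A => fun w d => existT _ (projT1 d) (fst (projT2 d), fromS A _ (snd (projT2 d)))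
  end.

Lemma to_from : forall A w (a : S' A w), toS A w (fromS A w a) = a
with from_to : forall A w (a : sem M A w), fromS A w (toS A w a) = a.
Proof.
  - destruct A; intros w a; simpl.
    + reflexivity.
    + reflexivity.
    + rewrite !to_from; destruct a; reflexivity.
    + apply functional_extensionality_dep; intro w'.
      apply functional_extensionality; intro i.
      apply functional_extensionality; intro x.
      rewrite !to_from; reflexivity.
    + rewrite to_from. destruct a as [v [m x]]; reflexivity.
  - destruct A; intros w a; simpl.
    + reflexivity.
    + reflexivity.
    + rewrite !from_to; destruct a; reflexivity.
    + apply functional_extensionality_dep; intro w'.
      apply functional_extensionality; intro i.
      apply functional_extensionality; intro x.
      rewrite !from_to; reflexivity.
    + rewrite from_to. destruct a as [v [m x]]; reflexivity.
Qed.

Lemma to_tr : forall A w w' (i : Ri w w') (a : sem M A w),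
  toS A w' (sem_tr M A i a) = sem_tr' F VV VVtr A i (toS A w a).
Proof.
  induction A; intros; simpl; try reflexivity.
  - rewrite IHA1, IHA2; reflexivity.
  - rewrite IHA; reflexivity.
Qed.

Fixpoint toE (G : Ctx) : forall w, Env M G w -> Env' F VV G w :=
  match G with
  | [] => fun w g => g
  | A :: G => fun w g => (toE G w (fst g), toS A w (snd g))
  end.
Fixpoint fromE (G : Ctx) : forall w, Env' F VV G w -> Env M G w :=
  match G with
  | [] => fun w g => g
  | A :: G => fun w g => (fromE G w (fst g), fromS A w (snd g))
  end.

Lemma toE_fromE : forall G w g, toE G w (fromE G w g) = g.
Proof. induction G; intros; simpl. destruct g; reflexivity.
  rewrite IHG, to_from; destruct g; reflexivity. Qed.

Lemma toE_tr : forall G w w' (i : Ri w w') g,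
  toE G w' (env_tr M G i g) = env_tr' F VV VVtr G i (toE G w g).
Proof. induction G; intros; simpl. reflexivity. rewrite IHG, to_tr; reflexivity. Qed.

Lemma to_lookup : forall G A (x : Var G A) w g,
  toS A w (lookup M x w g) = lookup' F VV x w (toE G w g).
Proof. induction x; intros; simpl. reflexivity. apply IHx. Qed.

Definition rfM : hasRet L = true -> ReflM F := fun p => frame_refl L p (m_frame M).
Definition tfM : hasLet L = true -> TransM F := fun p => frame_trans L p (m_frame M).

Lemma to_eval : forall G A (t : Tm L G A) w g,
  toS A w (eval M t w g) = eval' L F VV VVtr rfM tfM t w (toE G w g).
Proof.
  induction t; intros; simpl.
  - apply to_lookup.
  - reflexivity.
  - rewrite IHt1, IHt2; reflexivity.
  - rewrite <- IHt; reflexivity.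
  - rewrite <- IHt; reflexivity.
  - apply functional_extensionality_dep; intro w'.
    apply functional_extensionality; intro i.
    apply functional_extensionality; intro x.
    rewrite IHt; simpl. rewrite toE_tr, to_from; reflexivity.
  - rewrite <- IHt1, <- IHt2. simpl. rewrite from_to. reflexivity.
  - rewrite IHt2. simpl. rewrite toE_tr. rewrite <- IHt1. reflexivity.
  - rewrite IHt; reflexivity.
  - rewrite <- IHt1. simpl. rewrite <- toE_tr.
    set (d := eval M t1 w g).
    pose proof (IHt2 (projT1 d) (env_tr M G (Defs.incl (fst (projT2 d))) g, snd (projT2 d))) as H.
    match goal with |- context [eval' L F VV VVtr rfM tfM t2 ?w0 ?g0] =>
      replace (eval' L F VV VVtr rfM tfM t2 w0 g0) with
        (toS (Dia B) w0 (eval M t2 (projT1 d) (env_tr M G (Defs.incl (fst (projT2 d))) g, snd (projT2 d))))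
        by exact H end.
    reflexivity.
Qed.
End Iso.

Definition single {L G A} : Tm L G (Dia A) -> Tel L G (A :: G) :=
  match L as L0 return Tm L0 G (Dia A) -> Tel L0 G (A :: G) with
  | cS => fun t => @tlast cS _ _ eq_refl t
  | cSR => fun t => @tlast cSR _ _ eq_refl t
  | cSJ => fun t => @tlast cSJ _ _ eq_refl t
  | cML => fun t => @tcons cML _ _ _ eq_refl t (@tnil cML _ eq_refl)
  end.

Fixpoint close {L G D} (m : Tel L G D) {A} : Tm L D A -> Tm L G (Dia A) :=
  match m in Tel _ G0 D0 return Tm L D0 A -> Tm L G0 (Dia A) with
  | tnil _ p => fun s => ret p s
  | tlast p b => fun s => letmap p b s
  | tcons p b m' => fun s => letin p b (close m' s)
  end.

Lemma single_eta : forall L G A (t : Tm L G (Dia A)), Conv t (close (single t) (var vz)).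
Proof. destruct L; intros; simpl.
    + apply ax_letmap_eta.
    + apply ax_letmap_eta.
    + apply ax_letmap_eta.
    + apply ax_let_eta.
Qed.

Section NbE.
Variable L : Calc.
Definition Vb : W (SF L) -> Type := fun G => Tm L G Base.
Definition Vtrb : forall w w', Ri w w' -> Vb w -> Vb w' := fun G D r t => ren r t.
Notation sm := (sem' (SF L) Vb).

Fixpoint prefix (q : hasLet L = true) {G D} (m : Tel L G D) {B} : Tm L D (Dia B) -> Tm L G (Dia B) :=
  match m in Tel _ G0 D0 return Tm L D0 (Dia B) -> Tm L G0 (Dia B) with
  | tnil _ _ => fun X => X
  | tlast _ b => fun X => letin q b X
  | tcons p b m' => fun X => letin p b (prefix q m' X)
  end.

Fixpoint reify (A : Ty) : forall G, sm A G -> Tm L G A :=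
  match A return forall G, sm A G -> Tm L G A with
  | Base => fun G a => a
  | Unit => fun G a => tunit
  | Prod A B => fun G a => pair (reify A G (fst a)) (reify B G (snd a))
  | Arr A B => fun G f => lam (reify B (A :: G) (f (A :: G) wkR (reflect A (A :: G) (var vz))))
  | Dia A => fun G d => close (fst (projT2 d)) (reify A _ (snd (projT2 d)))
  end
with reflect (A : Ty) : forall G, Tm L G A -> sm A G :=
  match A return forall G, Tm L G A -> sm A G with
  | Base => fun G t => t
  | Unit => fun G t => tt
  | Prod A B => fun G t => (reflect A G (fst_ t), reflect B G (snd_ t))
  | Arr A B => fun G t => fun G' r a => reflect B G' (Defs.app (ren r t) (reify A G' a))
  | Dia A => fun G t => existT _ (A :: G) (single t, reflect A (A :: G) (var vz))
  end.

Fixpoint R (A : Ty) : forall G, Tm L G A -> sm A G -> Prop :=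
  match A return forall G, Tm L G A -> sm A G -> Prop with
  | Base => fun G t a => Conv t a
  | Unit => fun _ _ _ => True
  | Prod A B => fun G t a => R A G (fst_ t) (fst a) /\ R B G (snd_ t) (snd a)
  | Arr A B => fun G t f => forall G' (r : Ren G G') s a,
      R A G' s a -> R B G' (Defs.app (ren r t) s) (f G' r a)
  | Dia A => fun G t d => exists s, R A (projT1 d) s (snd (projT2 d)) /\
      Conv t (close (fst (projT2 d)) s)
  end.

Lemma R_conv : forall A G (t t' : Tm L G A) a, Conv t t' -> R A G t a -> R A G t' a.
Proof.
  induction A; intros G t t' a Hc H; simpl in *.
  - eapply cv_trans; [apply cv_sym|]; eauto.
  - auto.
  - destruct H; split; [apply (IHA1 _ (fst_ t)) | apply (IHA2 _ (snd_ t))]; auto; [apply cg_fst|apply cg_snd]; auto.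
  - intros G' r s a' Hs. eapply IHA2; [|apply H; eauto].
    apply cg_app; [apply conv_ren; auto| apply cv_refl].
  - destruct H as [s [Hs Hc']]. exists s; split; auto.
    eapply cv_trans; [apply cv_sym; eauto| auto].
Qed.

Lemma ren_close : forall G D (m : Tel L G D) A (s : Tm L D A) G' (r : Ren G G'),
  ren r (close m s) = close (fst (projT2 (tfactor L m G' r))) (ren (snd (projT2 (tfactor L m G' r))) s).
Proof. induction m; intros; simpl; try reflexivity. rewrite IHm. reflexivity. Qed.

Lemma R_mon : forall A G (t : Tm L G A) a, R A G t a ->
  forall G' (r : Ren G G'), R A G' (ren r t) (sem_tr' (SF L) Vb Vtrb A r a).
Proof.
  induction A; intros G t a H G' r; simpl in *.
  - apply conv_ren; auto.
  - auto.
  - destruct H; split; [exact (IHA1 _ _ _ H G' r)|exact (IHA2 _ _ _ H0 G' r)].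
  - intros G'' r' s a' Hs. rewrite ren_ren. apply (H G'' _ s a' Hs).
  - destruct H as [s [Hs Hc]].
    exists (ren (snd (projT2 (tfactor L (fst (projT2 a)) G' r))) s). split.
    + apply IHA; auto.
    + rewrite <- ren_close. apply conv_ren; auto.
Qed.

Lemma close_cong : forall G D (m : Tel L G D) A (s s' : Tm L D A), Conv s s' ->
  Conv (close m s) (close m s').
Proof. induction m; intros; simpl; [apply cg_ret|apply cg_letmap|apply cg_letin]; auto; apply cv_refl. Qed.

Lemma prefix_cong : forall q G D (m : Tel L G D) B (s s' : Tm L D (Dia B)), Conv s s' ->
  Conv (prefix q m s) (prefix q m s').
Proof. induction m; intros; simpl; auto; apply cg_letin; auto; apply cv_refl. Qed.

Lemma reify_reflect : forall A,
  (forall G (t : Tm L G A) a, R A G t a -> Conv t (reify A G a)) /\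
  (forall G (t : Tm L G A), R A G t (reflect A G t)).
Proof.
  induction A; split; intros; simpl in *.
  - auto.
  - apply cv_refl.
  - apply ax_unit_eta.
  - auto.
  - destruct IHA1 as [IA1 IA1'], IHA2 as [IA2 IA2']. destruct H.
    eapply cv_trans; [apply ax_prod_eta|]. apply cg_pair; eauto.
  - destruct IHA1 as [IA1 IA1'], IHA2 as [IA2 IA2']. split; auto.
  - destruct IHA1 as [IA1 IA1'], IHA2 as [IA2 IA2'].
    eapply cv_trans; [apply ax_arr_eta|]. apply cg_lam.
    apply IA2. apply H. apply IA1'.
  - destruct IHA1 as [IA1 IA1'], IHA2 as [IA2 IA2'].
    intros G' r s a Hs. eapply R_conv; [|apply IA2'].
    apply cg_app; [apply cv_refl| apply cv_sym; auto].
  - destruct IHA as [IA IA']. destruct H as [s [Hs Hc]].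
    eapply cv_trans; [apply Hc|]. apply close_cong; auto.
  - destruct IHA as [IA IA']. exists (var vz). split; [apply IA'|].
    apply single_eta.
Qed.

End NbE.

Lemma conv_eq : forall L G A (a b : Tm L G A), a = b -> Conv a b.
Proof. intros; subst; apply cv_refl. Qed.

Section Fund.
Variable L : Calc.
Variable rf : hasRet L = true -> ReflM (SF L).
Variable tf : hasLet L = true -> TransM (SF L).
Hypothesis Hrf : forall p w, refl_m (rf p) w = tnil w p.
Hypothesis Htf : forall p u v w (m1 : Tel L u v) (m2 : Tel L v w),
  trans_m (tf p) m1 m2 = tapp L p m1 m2.

Notation ev := (eval' L (SF L) (Vb L) (Vtrb L) rf tf).
Notation RR := (R L).

Lemma letmap_close : forall G D (m : Tel L G D) A B p (s : Tm L D A) (v : Tm L (A :: G) B),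
  Conv (letmap p (close m s) v) (close m (sub (scons s (fun _ x => var (tincl L m _ x))) v)).
Proof.
  induction m; intros; simpl.
  - apply ax_letmap_ret.
  - assert (p = e) by apply bool_pi. subst p. apply ax_letmap_assoc.
  - eapply cv_trans; [apply ax_letmap_let|]. apply cg_letin; [apply cv_refl|].
    eapply cv_trans; [apply IHm|].
    unfold wk1. rewrite sub_ren. apply conv_eq. f_equal. apply sub_ext; apply var_case; reflexivity.
Qed.

Lemma letin_close : forall G D (m : Tel L G D) A B p (s : Tm L D A) (v : Tm L (A :: G) (Dia B)),
  Conv (letin p (close m s) v) (prefix L p m (sub (scons s (fun _ x => var (tincl L m _ x))) v)).
Proof.
  induction m; intros; simpl.
  - apply ax_let_beta.
  - apply ax_let_letmap.
  - assert (p = e) by apply bool_pi. subst p.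
    eapply cv_trans; [apply ax_let_assoc|]. apply cg_letin; [apply cv_refl|].
    eapply cv_trans; [apply IHm|]. apply prefix_cong.
    unfold wk1. rewrite sub_ren. apply conv_eq. apply sub_ext; apply var_case; reflexivity.
Qed.

Lemma prefix_close : forall p G D (m : Tel L G D) E (m' : Tel L D E) A (s : Tm L E A),
  prefix L p m (close m' s) = close (tapp L p m m') s.
Proof. induction m; intros; simpl; try reflexivity. rewrite IHm; reflexivity. Qed.

Fixpoint EnvR (G : Ctx) : forall D, Sub L G D -> Env' (SF L) (Vb L) G D -> Prop :=
  match G return forall D, Sub L G D -> Env' (SF L) (Vb L) G D -> Prop with
  | [] => fun _ _ _ => True
  | A :: G => fun D s g => EnvR G D (fun _ x => s _ (vs x)) (fst g) /\ RR A D (s _ vz) (snd g)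
  end.

Lemma EnvR_mon : forall G D s g, EnvR G D s g -> forall D' (r : Ren D D'),
  EnvR G D' (fun _ x => ren r (s _ x)) (env_tr' (SF L) (Vb L) (Vtrb L) G r g).
Proof.
  induction G; intros D s g H D' r; simpl in *; auto.
  destruct H; split; [apply (IHG _ _ _ H)| apply R_mon; auto].
Qed.

Lemma lookupR : forall G A (x : Var G A) D s g, EnvR G D s g ->
  RR A D (s A x) (lookup' (SF L) (Vb L) x D g).
Proof. induction x; intros D s g H; simpl in *; destruct H; auto. apply (IHx _ _ _ H). Qed.

Lemma sub_lift_scons : forall G D E A B (s : Sub L G D) (r : Ren D E) (a : Tm L E A) (u : Tm L (A :: G) B),
  sub (scons a (fun _ x => var (r _ x))) (sub (liftS s) u) = sub (scons a (fun _ x => ren r (s _ x))) u.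
Proof.
  intros. rewrite sub_sub. apply sub_ext; apply var_case; [reflexivity|].
  intros; cbn. unfold wk. rewrite sub_ren. apply sub_var.
Qed.

Lemma fund : forall G A (t : Tm L G A) D (s : Sub L G D) g, EnvR G D s g ->
  RR A D (sub s t) (ev t D g).
Proof.
  induction t; intros D s g H; simpl.
  - apply lookupR; auto.
  - exact I.
  - split.
    + eapply R_conv; [apply cv_sym, ax_fst_beta| apply IHt1; auto].
    + eapply R_conv; [apply cv_sym, ax_snd_beta| apply IHt2; auto].
  - exact (proj1 (IHt D s g H)).
  - exact (proj2 (IHt D s g H)).
  - intros G' r s' a Hs.
    eapply R_conv; [| apply (IHt G' (scons s' (fun _ x => ren r (s _ x))) (_, a)); split; [apply EnvR_mon; auto| exact Hs]].
    eapply cv_trans; [| apply cv_sym, ax_arr_beta].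
    apply conv_eq. unfold subst1. rewrite sub_ren.
    rewrite <- sub_lift_scons. apply sub_ext; apply var_case; reflexivity.
  - pose proof (IHt1 D s g H D (fun _ x => x) _ _ (IHt2 D s g H)) as K.
    rewrite ren_id in K by reflexivity. exact K.
  - destruct (IHt1 D s g H) as [s0 [Hs0 Hc]].
    exists (sub (scons s0 (fun _ x => ren (tincl L (fst (projT2 (ev t1 D g)))) (s _ x))) t2).
    split.
    + apply IHt2. split; [apply EnvR_mon; auto| exact Hs0].
    + eapply cv_trans; [apply cg_letmap; [exact Hc| apply cv_refl]|].
      eapply cv_trans; [apply letmap_close|].
      rewrite sub_lift_scons. apply cv_refl.
  - rewrite Hrf. exists (sub s t). split; [apply IHt; auto| apply cv_refl].
  - destruct (IHt1 D s g H) as [s0 [Hs0 Hc]].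
    set (m := fst (projT2 (ev t1 D g))).
    destruct (IHt2 _ (scons s0 (fun _ x => ren (tincl L m) (s _ x)))
      (env_tr' (SF L) (Vb L) (Vtrb L) G (tincl L m) g, snd (projT2 (ev t1 D g))))
      as [s2 [Hs2 Hc2]].
    { split; [apply EnvR_mon; auto| exact Hs0]. }
    exists s2. split; [exact Hs2|].
    rewrite Htf. rewrite <- prefix_close.
    eapply cv_trans; [apply cg_letin; [exact Hc| apply cv_refl]|].
    eapply cv_trans; [apply letin_close|].
    apply prefix_cong. rewrite sub_lift_scons. exact Hc2.
Qed.


End Fund.

Section Comp.
Variable L : Calc.
Variable rf : hasRet L = true -> ReflM (SF L).
Variable tf : hasLet L = true -> TransM (SF L).
Hypothesis Hrf : forall p w, refl_m (rf p) w = tnil w p.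
Hypothesis Htf : forall p u v w (m1 : Tel L u v) (m2 : Tel L v w),
  trans_m (tf p) m1 m2 = tapp L p m1 m2.

Fixpoint idEnv (G : Ctx) : Env' (SF L) (Vb L) G G :=
  match G return Env' (SF L) (Vb L) G G with
  | [] => tt
  | A :: G => (env_tr' (SF L) (Vb L) (Vtrb L) G (@wkR G A) (idEnv G), reflect L A (A :: G) (var vz))
  end.

Lemma EnvR_id : forall G, EnvR L G G idS (idEnv G).
Proof.
  induction G; simpl; auto. split.
  - apply (EnvR_mon L _ _ _ _ IHG (a :: G) wkR).
  - apply reify_reflect.
Qed.

Lemma complete : forall G A (t u : Tm L G A),
  eval' L (SF L) (Vb L) (Vtrb L) rf tf t G (idEnv G) =
  eval' L (SF L) (Vb L) (Vtrb L) rf tf u G (idEnv G) -> Conv t u.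
Proof.
  intros G A t u E.
  pose proof (fund L rf tf Hrf Htf G A t G idS _ (EnvR_id G)) as Ht.
  pose proof (fund L rf tf Hrf Htf G A u G idS _ (EnvR_id G)) as Hu.
  rewrite sub_id in Ht, Hu.
  apply (proj1 (reify_reflect L A)) in Ht.
  apply (proj1 (reify_reflect L A)) in Hu.
  rewrite E in Ht. eapply cv_trans; [exact Ht| apply cv_sym; exact Hu].
Qed.
End Comp.

Lemma transfer : forall L (M : Model L) G A (t u : Tm L G A),
  (forall w g, eval M t w g = eval M u w g) ->
  forall w g', eval' L (mbase M) (VV L M) (VVtr L M) (rfM L M) (tfM L M) t w g' =
               eval' L (mbase M) (VV L M) (VVtr L M) (rfM L M) (tfM L M) u w g'.
Proof.
  intros L M G A t u H w g'.
  rewrite <- (toE_fromE L M G w g'), <- !to_eval, H. reflexivity.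
Qed.

Definition mkModel (L : Calc) : Model L.
Proof.
  destruct L;
  match goal with |- Model ?L => refine (Build_Model L (mkFrame L) (Vb L) (Vtrb L) _ _) end;
  intros; unfold Vtrb; simpl;
  solve [apply ren_id; reflexivity | rewrite ren_ren; reflexivity].
Defined.

Theorem corollary5p2 (L : Calc) (G : Ctx) (A : Ty) (t u : Tm L G A) :
  (forall (M : Model L) (w : W (mbase M)) (g : Env M G w),
      eval M t w g = eval M u w g) ->
  Conv t u.
Proof.
  revert G A t u. destruct L; intros G A t u H;
  pose proof (transfer _ (mkModel _) G A t u (H _)) as T;
  (eapply complete; [ | | apply T]); simpl; intros; try discriminate;
  try reflexivity; f_equal; apply bool_pi.
Qed.
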